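(* Let $\bar Q$ be a gentle bound quiver with finitely many strings, and define $\pi_\downarrow,\pi^\uparrow:\mathrm{Bicl}(\bar Q)\to\mathrm{Bicl}(\bar Q)$ by $\pi_\downarrow(S)=\{\sigma\in\mathcal S^\pm(\bar Q):\Sigma_{\mathrm{bot}}(\sigma)\subseteq S\}$ and $\pi^\uparrow(S)=\{\sigma\in\mathcal S^\pm(\bar Q):\Sigma_{\mathrm{top}}(\sigma)\cap S\ne\emptyset\}$. Then (i) $\pi_\downarrow(S)\subseteq S\subseteq\pi^\uparrow(S)$ for every $S\in\mathrm{Bicl}(\bar Q)$; (ii) $\pi_\downarrow\circ\pi_\downarrow=\pi_\downarrow\circ\pi^\uparrow=\pi_\downarrow$ and $\pi^\uparrow\circ\pi^\uparrow=\pi^\uparrow\circ\pi_\downarrow=\pi^\uparrow$; (iii) $\pi_\downarrow$ and $\pi^\uparrow$ are order preserving. Consequently the fibers of $\pi^\uparrow$ and $\pi_\downarrow$ coincide, and the relation $S\equiv T\iff\pi_\downarrow(S)=\pi_\downarrow(T)\iff\pi^\uparrow(S)=\pi^\uparrow(T)$ is an order congruence on $\mathrm{Bicl}(\bar Q)$.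
   Context: A gentle bound quiver is $\bar Q=(Q,I)$, $Q$ finite (paths composed left to right), $I$ admissible generated by length-two paths, each vertex with at most two incoming and two outgoing arrows, and for each arrow $\beta$ at most one $\alpha$ with $t(\alpha)=s(\beta),\alpha\beta\notin I$, at most one with $\alpha\beta\in I$, and dually at most one $\gamma$ with $s(\gamma)=t(\beta),\beta\gamma\notin I$ and at most one with $\beta\gamma\in I$. Strings: composable reduced words $\alpha_1^{\epsilon_1}\cdots\alpha_\ell^{\epsilon_\ell}$ in arrows and inverse arrows with no factor $\pi^{\pm1}$ for a path $\pi\in I$, or length-zero $\varepsilon_v$; $\mathcal S^\pm(\bar Q)$ = strings up to inversion. Top/bottom substrings of a string $\sigma=\alpha_1^{\epsilon_1}\cdots\alpha_\ell^{\epsilon_\ell}$: a substring $\alpha_i^{\epsilon_i}\cdots\alpha_j^{\epsilon_j}$ (including length-zero substrings at vertices of $\sigma$) is top if ($i=1$ or $\epsilon_{i-1}=-1$) and ($j=\ell$ or $\epsilon_{j+1}=1$), i.e. at each endpoint $\sigma$ ends or has an arrow pointing away; bottom if at each endpoint $\sigma$ ends or has an arrow pointing towards it. $\Sigma_{\mathrm{top}}(\sigma),\Sigma_{\mathrm{bot}}(\sigma)$ are the sets of undirected strings so obtained (both contain $\sigma$). Closure: $\sigma\circ\tau$ = set of undirected strings obtained by joining an endpoint of $\sigma$ to an endpoint of $\tau$ by one arrow $\gamma^{\pm1}$, $\gamma\in Q_1$; $\overline S$ = union of all $\sigma_1\circ\cdots\circ\sigma_\ell$, $\ell\ge1$, $\sigma_i\in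 S$. Biclosed: $S$ and its complement in $\mathcal S^\pm(\bar Q)$ are closed. $\mathrm{Bicl}(\bar Q)$: biclosed sets ordered by inclusion (a lattice). It is known that $\pi_\downarrow(S),\pi^\uparrow(S)$ are biclosed for biclosed $S$. An order congruence on a poset $P$ is an equivalence relation whose classes are intervals and such that the maps sending an element to the minimum (resp. maximum) of its class are order preserving. *)

(* Defs.v *)
From mathcomp Require Import all_boot.
Set Implicit Arguments. Unset Strict Implicit. Unset Printing Implicit Defensive.

Section Gentle.
Variables (V A : finType) (src tgt : A -> V) (rel : A -> A -> bool).
(* rel a b  <->  the length-two path  a b  (t a = s b) is a generator of I.
   Paths are composed left to right. *)

Definition arrow_composable (a b : A) : bool := tgt a == src b.

Definition gentle : Prop :=
  (forall a b, rel a b -> tgt a = src b) /\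
  (* admissibility: every sufficiently long path lies in I, i.e. contains a
     generator as a factor (I is then contained in paths of length >= 2) *)
  (exists N : nat, forall (a0 : A) (p : seq A), N <= size p ->
       path arrow_composable a0 p ->
       ~~ path (fun a b => arrow_composable a b && ~~ rel a b) a0 p) /\
  (forall v : V, #|[pred a | tgt a == v]| <= 2) /\
  (forall v : V, #|[pred a | src a == v]| <= 2) /\
  (forall b : A, #|[pred a | (tgt a == src b) && ~~ rel a b]| <= 1) /\
  (forall b : A, #|[pred a | (tgt a == src b) && rel a b]| <= 1) /\
  (forall b : A, #|[pred c | (tgt b == src c) && ~~ rel b c]| <= 1) /\
  (forall b : A, #|[pred c | (tgt b == src c) && rel b c]| <= 1).

(** Letters: (a, true) = a^{+1}, (a, false) = a^{-1}. *)
Definition letter := (A * bool)%type.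
Definition lsrc (l : letter) : V := if l.2 then src l.1 else tgt l.1.
Definition ltgt (l : letter) : V := if l.2 then tgt l.1 else src l.1.
Definition flip (l : letter) : letter := (l.1, ~~ l.2).

(** A (directed) word: start vertex together with a list of letters;
    (v, [::]) is the length-zero string eps_v. *)
Definition Str := (V * seq letter)%type.

Fixpoint walk (v : V) (w : seq letter) : bool :=
  if w is l :: w' then (lsrc l == v) && walk (ltgt l) w' else true.

Definition endv (v : V) (w : seq letter) : V := last v [seq ltgt l | l <- w].

(* forbidden consecutive pairs: non-reduced, or a factor pi or pi^{-1}
   with pi a generator of I *)
Definition bad_pair (l1 l2 : letter) : bool :=
  [|| (l1.1 == l2.1) && (l1.2 != l2.2),
      [&& l1.2, l2.2 & rel l1.1 l2.1]
    | [&& ~~ l1.2, ~~ l2.2 & rel l2.1 l1.1]].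

Definition is_string (x : Str) : Prop :=
  walk x.1 x.2 /\ sorted (fun l1 l2 => ~~ bad_pair l1 l2) x.2.

Definition str_inv (x : Str) : Str := (endv x.1 x.2, rev [seq flip l | l <- x.2]).

Definition finitely_many_strings : Prop :=
  exists L : seq Str, forall x, is_string x -> x \in L.

(** Sets of undirected strings are encoded as inversion-closed sets of
    directed strings. *)
Definition strset := Str -> Prop.
Definition ssubset (S T : strset) : Prop := forall x, S x -> T x.
Definition usingle (x : Str) : strset := fun y => y = x \/ y = str_inv x.

(** Substrings between vertex positions a <= b (0 <= a <= b <= length). *)
Definition substr (x : Str) (a b : nat) : Str :=
  (endv x.1 (take a x.2), take (b - a) (drop a x.2)).

Definition is_top (w : seq letter) (a b : nat) : bool :=
  ((a == 0) || (if onth w a.-1 is Some l then ~~ l.2 else false)) &&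
  ((b == size w) || (if onth w b is Some l then l.2 else false)).

Definition is_bot (w : seq letter) (a b : nat) : bool :=
  ((a == 0) || (if onth w a.-1 is Some l then l.2 else false)) &&
  ((b == size w) || (if onth w b is Some l then ~~ l.2 else false)).

Definition Sigma_top (x : Str) : strset := fun y =>
  exists a b, a <= b <= size x.2 /\ is_top x.2 a b /\ usingle (substr x a b) y.

Definition Sigma_bot (x : Str) : strset := fun y =>
  exists a b, a <= b <= size x.2 /\ is_bot x.2 a b /\ usingle (substr x a b) y.

Definition str_join (x : Str) (l : letter) (y : Str) : Str := (x.1, x.2 ++ l :: y.2).

Definition str_comp (x y : Str) : strset := fun z =>
  exists x' y' (l : letter), usingle x x' /\ usingle y y' /\
    ltgt l = y'.1 /\ is_string (str_join x' l y') /\ usingle (str_join x' l y') z.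

Definition comp_set (X : strset) (y : Str) : strset :=
  fun z => exists x, X x /\ str_comp x y z.

Definition iter_comp (x1 : Str) (rest : seq Str) : strset :=
  foldl comp_set (usingle x1) rest.

Definition str_closure (S : strset) : strset := fun z =>
  exists x1 rest, S x1 /\ (forall y, y \in rest -> S y) /\ iter_comp x1 rest z.

Definition str_closed (S : strset) : Prop := ssubset (str_closure S) S.

Definition str_complement (S : strset) : strset := fun x => is_string x /\ ~ S x.

Definition biclosed (S : strset) : Prop :=
  ssubset S is_string /\ (forall x, S x -> S (str_inv x)) /\
  str_closed S /\ str_closed (str_complement S).

Definition pi_down (S : strset) : strset := fun x =>
  is_string x /\ ssubset (Sigma_bot x) S.

Definition pi_up (S : strset) : strset := fun x =>
  is_string x /\ exists y, Sigma_top x y /\ S y.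

End Gentle.

Section OrderCongruence.
Variables (X : Type) (P : X -> Prop) (le : X -> X -> Prop) (R : X -> X -> Prop).

Definition class_min (x m : X) : Prop :=
  P m /\ R x m /\ forall y, P y -> R x y -> le m y.
Definition class_max (x m : X) : Prop :=
  P m /\ R x m /\ forall y, P y -> R x y -> le y m.

Definition order_congruence : Prop :=
  (forall x, P x -> R x x) /\
  (forall x y, P x -> P y -> R x y -> R y x) /\
  (forall x y z, P x -> P y -> P z -> R x y -> R y z -> R x z) /\
  (forall x, P x -> exists m M, P m /\ P M /\
      forall y, P y -> (R x y <-> le m y /\ le y M)) /\
  (forall x y mx my, P x -> P y -> le x y ->
      class_min x mx -> class_min y my -> le mx my) /\
  (forall x y mx my, P x -> P y -> le x y ->
      class_max x mx -> class_max y my -> le mx my).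
End OrderCongruence.

(* Main.v *)
Require Import Defs.
From mathcomp Require Import all_boot zify.
From Stdlib Require Import Classical FunctionalExtensionality PropExtensionality.
Set Implicit Arguments. Unset Strict Implicit. Unset Printing Implicit Defensive.

Section W.
Variables (V A : finType) (src tgt : A -> V) (rel : A -> A -> bool).
Local Notation letter := (letter A).
Local Notation Str := (Str V A).
Local Notation lsrc := (lsrc src tgt).
Local Notation ltgt := (ltgt src tgt).
Local Notation walk := (walk src tgt).
Local Notation endv := (endv src tgt).
Local Notation inv := (str_inv src tgt).
Local Notation substr := (substr src tgt).
Local Notation is_string := (is_string src tgt rel).

Lemma endv_cat v s1 s2 : endv v (s1 ++ s2) = endv (endv v s1) s2.
Proof. by rewrite /endv map_cat last_cat. Qed.

Lemma endv_rcons v s l : endv v (rcons s l) = ltgt l.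
Proof. by rewrite /endv map_rcons last_rcons. Qed.

Lemma walk_cat v s1 s2 : walk v (s1 ++ s2) = walk v s1 && walk (endv v s1) s2.
Proof.
elim: s1 v => [|l s1 IH] v //=. by rewrite IH andbA.
Qed.

Lemma walk_rcons v s l : walk v (rcons s l) = walk v s && (lsrc l == endv v s).
Proof. by rewrite -cats1 walk_cat /= andbT. Qed.

Lemma ltgt_flip l : ltgt (flip l) = lsrc l.
Proof. by case: l => a []. Qed.
Lemma lsrc_flip l : lsrc (flip l) = ltgt l.
Proof. by case: l => a []. Qed.
Lemma flipK : cancel (@flip A) (@flip A).
Proof. by case=> a []. Qed.

Lemma endv_inv u s : walk u s -> endv (endv u s) (rev (map (@flip A) s)) = u.
Proof.
case: s => [|l s] //= /andP[/eqP <- _].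
by rewrite rev_cons endv_rcons ltgt_flip.
Qed.

Lemma walk_inv v w : walk v w -> walk (endv v w) (rev (map (@flip A) w)).
Proof.
elim: w v => [|l w IH] v //= /andP[/eqP Hv Hw].
rewrite rev_cons walk_rcons (IH _ Hw) /=.
have -> : endv v (l :: w) = endv (ltgt l) w by [].
by rewrite (endv_inv Hw) lsrc_flip.
Qed.

Lemma bad_pair_flip a b : bad_pair rel (flip b) (flip a) = bad_pair rel a b.
Proof.
case: a => a1 [] ; case: b => b1 []; rewrite /bad_pair /flip /= ?andbF ?andbT ?orbF //=;
by rewrite eq_sym.
Qed.

Lemma inv_string x : is_string x -> is_string (inv x).
Proof.
case: x => v w [Hw Hs]; split; first exact: walk_inv.
rewrite /= rev_sorted sorted_map.
case: w Hs {Hw} => [|l w] //=.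
rewrite (@eq_path _ _ (fun l1 l2 => ~~ bad_pair rel l1 l2)) // => a b /=.
by rewrite bad_pair_flip.
Qed.

Lemma invK x : walk x.1 x.2 -> inv (inv x) = x.
Proof.
case: x => v w /= Hw; rewrite /str_inv /= endv_inv //.
by rewrite map_rev revK (mapK flipK).
Qed.

Lemma walk_drop v w a : walk v w -> walk (endv v (take a w)) (drop a w).
Proof. by rewrite -{1}(cat_take_drop a w) walk_cat => /andP[]. Qed.
Lemma walk_take v w a : walk v w -> walk v (take a w).
Proof. by rewrite -{1}(cat_take_drop a w) walk_cat => /andP[]. Qed.

Lemma substr_string x a b : is_string x -> is_string (substr x a b).
Proof.
case: x => v w [Hw Hs]; rewrite /substr /=; split.
  by apply: walk_take; apply: walk_drop.
by apply: take_sorted; apply: drop_sorted.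
Qed.

Lemma size_substr x a b : a <= b -> b <= size x.2 -> size (substr x a b).2 = b - a.
Proof. move=> ab bn; rewrite /substr /= size_takel // size_drop; lia. Qed.

Lemma substr_full x : substr x 0 (size x.2) = x.
Proof. by case: x => v w; rewrite /substr /= take0 drop0 subn0 take_size. Qed.

Lemma drop_take' (T : Type) c k (s : seq T) : c <= k -> drop c (take k s) = take (k - c) (drop c s).
Proof. by move=> ck; rewrite take_drop subnK. Qed.

Lemma substr_trans x a b c d : c <= d -> d <= b - a ->
  substr (substr x a b) c d = substr x (a + c) (a + d).
Proof.
case: x => v w cd db; rewrite /substr /=.
have E : drop c (take (b - a) (drop a w)) = take (b - a - c) (drop (a + c) w).
  by rewrite drop_take'; [rewrite drop_drop addnC | lia].
rewrite E take_takel; last lia.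
rewrite -endv_cat take_takel; last lia.
rewrite -takeD. congr (_, take _ _); lia.
Qed.

Lemma substr_join x i m k l : i <= m -> m < k -> k <= size x.2 ->
  onth x.2 m = Some l ->
  substr x i k = str_join (substr x i m) l (substr x m.+1 k) /\
  ltgt l = (substr x m.+1 k).1.
Proof.
case: x => v w im mk /= kn Hl.
have Hn := onth_nth l l w m Hl.
have mn : m < size w by lia.
rewrite /substr /str_join /=; split.
  congr (_, _).
  have -> : k - i = (m - i) + (k - m) by lia.
  rewrite takeD drop_drop subnK // (drop_nth l mn) Hn.
  by have -> : k - m = (k - m.+1).+1 by lia.
by rewrite (take_nth l mn) endv_rcons Hn.
Qed.

Lemma join_split x l z : ltgt l = z.1 ->
  let J := str_join x l z in
  substr J 0 (size x.2) = x /\ substr J (size x.2).+1 (size J.2) = z /\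
  onth J.2 (size x.2) = Some l.
Proof.
case: x => v w; case: z => u s /= E; rewrite /substr /str_join /=; split; last split.
- by rewrite take0 drop0 subn0 take_size_cat.
- have H : w ++ l :: s = rcons w l ++ s by rewrite -cats1 -catA.
  rewrite H take_size_cat ?size_rcons // drop_size_cat ?size_rcons //.
  by rewrite endv_rcons E size_cat size_rcons addKn take_size.
- by rewrite onth_cat ltnn subnn.
Qed.

Definition Lc (s : bool) (w : seq letter) a :=
  (a == 0) || (if onth w a.-1 is Some l then l.2 == s else false).
Definition Rc (s : bool) (w : seq letter) b :=
  (b == size w) || (if onth w b is Some l then l.2 == s else false).

Lemma is_bot_LR w a b : is_bot w a b = Lc true w a && Rc false w b.
Proof.
rewrite /is_bot /Lc /Rc.
by case: (onth w a.-1) => [[? []]|]; case: (onth w b) => [[? []]|].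
Qed.
Lemma is_top_LR w a b : is_top w a b = Lc false w a && Rc true w b.
Proof.
rewrite /is_top /Lc /Rc.
by case: (onth w a.-1) => [[? []]|]; case: (onth w b) => [[? []]|].
Qed.

Lemma onth_take (T : Type) k (s : seq T) i : i < k -> onth (take k s) i = onth s i.
Proof. by move=> ik; rewrite !onthE map_take nth_take. Qed.
Lemma onth_drop (T : Type) a (s : seq T) i : onth (drop a s) i = onth s (a + i).
Proof. by rewrite !onthE map_drop nth_drop. Qed.
Lemma onth_rev (T : Type) (s : seq T) i : i < size s -> onth (rev s) i = onth s (size s - i.+1).
Proof. by move=> H; rewrite !onthE map_rev nth_rev ?size_map. Qed.

Lemma Lc0 s w : Lc s w 0. Proof. by []. Qed.
Lemma Rcn s w : Rc s w (size w). Proof. by rewrite /Rc eqxx. Qed.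

Lemma Lc_restr s w a b c : a <= c -> c <= b -> b <= size w -> Lc s w c ->
  Lc s (take (b - a) (drop a w)) (c - a).
Proof.
move=> ac cb bn; have [->|ne] := eqVneq c a; first by rewrite subnn.
rewrite /Lc; have -> : (c == 0) = false by lia.
have -> : (c - a == 0) = false by lia.
rewrite /= onth_take; last lia.
rewrite onth_drop; by have -> : a + (c - a).-1 = c.-1 by lia.
Qed.

Lemma Rc_restr s w a b d : a <= d -> d <= b -> b <= size w -> Rc s w d ->
  Rc s (take (b - a) (drop a w)) (d - a).
Proof.
move=> ad db bn; rewrite /Rc size_takel ?size_drop; last lia.
have [->|ne] := eqVneq d b; first by rewrite eqxx.
have -> : (d == size w) = false by lia.
have -> : (d - a == b - a) = false by lia.
rewrite /= onth_take; last lia.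
rewrite onth_drop; by have -> : a + (d - a) = d by lia.
Qed.

Lemma Lc_ext s w a b c : a <= b -> b <= size w -> c <= b - a -> Lc s w a ->
  Lc s (take (b - a) (drop a w)) c -> Lc s w (a + c).
Proof.
move=> ab bn cb Ha; have [->|ne] := eqVneq c 0; first by rewrite addn0.
rewrite /Lc; have -> : (c == 0) = false by lia.
have -> : (a + c == 0) = false by lia.
rewrite /= onth_take; last lia.
rewrite onth_drop; by have -> : a + c.-1 = (a + c).-1 by lia.
Qed.

Lemma Rc_ext s w a b d : a <= b -> b <= size w -> d <= b - a -> Rc s w b ->
  Rc s (take (b - a) (drop a w)) d -> Rc s w (a + d).
Proof.
move=> ab bn db Hb; have [->|ne] := eqVneq d (b - a).
  by have -> : a + (b - a) = b by lia.
rewrite /Rc size_takel ?size_drop; last lia.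
have -> : (d == b - a) = false by lia.
have -> : (a + d == size w) = false by lia.
rewrite /= onth_take; last lia.
by rewrite onth_drop.
Qed.

Lemma Lc_Rc s w a : Lc s w a -> 0 < a -> Rc s w a.-1.
Proof. by rewrite /Lc /Rc; case: a => //= a H _; rewrite H orbT. Qed.
Lemma Rc_Lc s w b : Rc s w b -> b < size w -> Lc s w b.+1.
Proof. rewrite /Rc /Lc /= => /orP[/eqP ->|->]; [by rewrite ltnn | by rewrite ?orbT].  Qed.

Lemma Lc_inv s w b : b <= size w ->
  Lc s (rev (map (@flip A) w)) (size w - b) = Rc (~~ s) w b.
Proof.
move=> bn; rewrite /Lc /Rc; have [->|ne] := eqVneq b (size w); first by rewrite subnn !eqxx.
have -> : (size w - b == 0) = false by lia.
rewrite /= onth_rev ?size_rev ?size_map; last lia.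
have -> : size w - (size w - b).-1.+1 = b by lia.
rewrite onth_map; case: (onth w b) => [[? [] ]|] //=; by case: s.
Qed.

Lemma Rc_inv s w a : a <= size w ->
  Rc s (rev (map (@flip A) w)) (size w - a) = Lc (~~ s) w a.
Proof.
move=> an; rewrite /Lc /Rc size_rev size_map; have [->|ne] := eqVneq a 0; first by rewrite subn0 !eqxx.
have -> : (size w - a == size w) = false by lia.
rewrite /= onth_rev ?size_rev ?size_map; last lia.
have -> : size w - (size w - a).+1 = a.-1 by lia.
rewrite onth_map; case: (onth w a.-1) => [[? [] ]|] //=; by case: s.
Qed.

Lemma substr_inv x a b : walk x.1 x.2 -> a <= b -> b <= size x.2 ->
  inv (substr x a b) = substr (inv x) (size x.2 - b) (size x.2 - a).
Proof.
case: x => v w /= Hw ab bn; rewrite /str_inv /substr /=; congr (_, _).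
- rewrite -endv_cat -takeD subnKC // take_rev size_map.
  have -> : size w - (size w - b) = b by lia.
  rewrite -map_drop.
  have Hd := walk_drop b Hw.
  have E : endv v w = endv (endv v (take b w)) (drop b w) by rewrite -endv_cat cat_take_drop.
  rewrite E.
  by rewrite (endv_inv Hd).
- rewrite drop_rev size_map.
  have -> : size w - (size w - b) = b by lia.
  rewrite take_rev size_takel ?size_map //.
  have -> : b - (size w - a - (size w - b)) = a by lia.
  by rewrite map_take map_drop take_drop subnK.
Qed.

Local Notation usingle := (usingle src tgt).

Definition Sig (s : bool) (x : Str) : strset V A := fun y =>
  exists a b, (a <= b) && (b <= size x.2) /\ (Lc s x.2 a && Rc (~~ s) x.2 b) /\
              usingle (substr x a b) y.

Lemma SbE x y : Sigma_bot src tgt x y <-> Sig true x y.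
Proof.
split; move=> [a [b [H1 [H2 H3]]]]; exists a, b; split => //; split => //; move: H2; by rewrite is_bot_LR.
Qed.
Lemma StE x y : Sigma_top src tgt x y <-> Sig false x y.
Proof.
split; move=> [a [b [H1 [H2 H3]]]]; exists a, b; split => //; split => //; move: H2; by rewrite is_top_LR.
Qed.

Lemma us_string u y : is_string u -> usingle u y -> is_string y.
Proof. by move=> Hu [->|->] //; apply: inv_string. Qed.

Lemma Sig_at s x a b : a <= b -> b <= size x.2 -> Lc s x.2 a -> Rc (~~ s) x.2 b ->
  Sig s x (substr x a b).
Proof. by move=> ab bn Ha Hb; exists a, b; rewrite ab bn Ha Hb; split => //; split => //; left. Qed.

Lemma Sig_self s x : Sig s x x.
Proof. by rewrite -{2}(substr_full x); apply: Sig_at => //; apply: Rcn. Qed.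

Lemma Sig_string s x y : is_string x -> Sig s x y -> is_string y.
Proof. move=> Hx [a [b [_ [_ H]]]]; apply: us_string H; exact: substr_string. Qed.

Lemma Sig_restr s J a b c d : a <= c -> c <= d -> d <= b -> b <= size J.2 ->
  (c == a) || Lc s J.2 c -> (d == b) || Rc (~~ s) J.2 d ->
  Sig s (substr J a b) (substr J c d).
Proof.
move=> ac cd db bn Hc Hd.
have E : substr J c d = substr (substr J a b) (c - a) (d - a).
  rewrite substr_trans; [|lia|lia]. by congr substr; lia.
rewrite E; apply: Sig_at.
- lia.
- rewrite size_substr //; lia.
- case/orP: Hc => [/eqP ->|Hc]; first by rewrite subnn.
  rewrite /substr /=; apply: Lc_restr => //; lia.
- case/orP: Hd => [/eqP ->|Hd].
    have Hs : size (substr J a b).2 = b - a by apply: size_substr; lia.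
    by rewrite -Hs Rcn.
  rewrite /substr /=; apply: Rc_restr => //; lia.
Qed.

Lemma Sig_inv s x y : is_string x -> Sig s (inv x) y -> Sig s x y.
Proof.
case: x => v w Hx [c [d [/andP[cd dn] [/andP[Hc Hd] Hy]]]].
have Hw : walk v w by case: Hx.
move: cd dn Hc Hd Hy; rewrite /= size_rev size_map => cd dn.
have -> : c = size w - (size w - c) by lia.
have -> : d = size w - (size w - d) by lia.
rewrite Lc_inv ?Rc_inv; [|lia|lia].
rewrite negbK => Hb Ha.
rewrite -substr_inv //=; [|lia|lia].
move=> Hy; exists (size w - d), (size w - c); split; first by rewrite /=; apply/andP; split; lia.
split; first by rewrite Ha Hb.
case: Hy => ->; first by right.
left; rewrite invK //; by case: (substr_string (size w - d) (size w - c) Hx).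
Qed.

Lemma Sig_trans s x y z : is_string x -> Sig s x y -> Sig s y z -> Sig s x z.
Proof.
move=> Hx [a [b [/andP[ab bn] [/andP[Ha Hb] Hy]]]].
have Hsub := substr_string a b Hx.
have key : forall z, Sig s (substr x a b) z -> Sig s x z.
  move=> z0 [c [d [/andP[cd dn] [/andP[Hc Hd] Hz]]]].
  rewrite size_substr // in dn.
  exists (a + c), (a + d); split; first by apply/andP; split; lia.
  have cb : c <= b - a by lia.
  split; first by rewrite (Lc_ext ab bn cb Ha Hc) (Rc_ext ab bn dn Hb Hd).
  by rewrite -(substr_trans x cd dn).
case: Hy => -> Hz; apply: key => //.
exact: Sig_inv.
Qed.

Definition SplitClosed (P : strset V A) := forall J m, is_string J -> m < size J.2 ->
  P (substr J 0 m) -> P (substr J m.+1 (size J.2)) -> P J.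

Lemma onth_some (w : seq letter) m : m < size w -> exists l, onth w m = Some l.
Proof.
move=> mn; case E: (onth w m) => [l|]; first by exists l.
by have := onthTE w m; rewrite E mn.
Qed.

Lemma split_of_closed P : str_closed src tgt rel P -> SplitClosed P.
Proof.
move=> HP J m HJ mn H1 H2.
have [l E] := onth_some mn.
have [EJ El] := substr_join (leq0n m) mn (leqnn _) E.
rewrite substr_full in EJ.
apply: HP; exists (substr J 0 m), [:: substr J m.+1 (size J.2)].
split => //; split; first by move=> y; rewrite inE => /eqP ->.
rewrite /iter_comp /=; exists (substr J 0 m); split; first by left.
exists (substr J 0 m), (substr J m.+1 (size J.2)), l.
split; first by left. split; first by left. split; first exact El.
split; first by rewrite -EJ.
by left.
Qed.

Lemma us_P (P : strset V A) x y : (forall x, P x -> P (inv x)) -> P x -> usingle x y -> P y.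
Proof. by move=> Hi Px [->|->] //; apply: Hi. Qed.

Lemma JC_of_split P : SplitClosed P -> forall x l z, P x -> P z -> ltgt l = z.1 ->
  is_string (str_join x l z) -> P (str_join x l z).
Proof.
move=> HS x l z Px Pz E Hs.
have [H1 [H2 H3]] := join_split x E.
apply: (HS _ (size x.2)) => //; first by rewrite /= size_cat /=; lia.
- by rewrite H1.
- by rewrite H2.
Qed.

Lemma closed_of_split P : (forall x, P x -> P (inv x)) -> SplitClosed P ->
  str_closed src tgt rel P.
Proof.
move=> Hi HS z [x1 [rest [Hx1 [Hrest Hz]]]].
have gen : forall X : strset V A, (forall y, X y -> P y) -> forall rest0,
    (forall y, y \in rest0 -> P y) -> forall z, foldl (comp_set src tgt rel) X rest0 z -> P z.
  move=> X HX rest0; elim: rest0 X HX => [|y r IH] X HX Hr z0 /=; first exact: HX.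
  apply: IH; last by move=> y0 Hy0; apply: Hr; rewrite inE Hy0 orbT.
  move=> z' [x [Xx [x' [y' [l [Hx' [Hy' [El [Hs Hz']]]]]]]]].
  have Px' : P x' by apply: (us_P Hi (HX _ Xx) Hx').
  have Py' : P y' by apply: (us_P Hi (Hr _ (mem_head _ _)) Hy').
  apply: (us_P Hi _ Hz'); exact: JC_of_split.
apply: (gen _ _ rest) Hz => //.
by move=> y; apply: us_P.
Qed.

Lemma split_sub P J i m k : SplitClosed P -> is_string J -> i <= m -> m < k -> k <= size J.2 ->
  P (substr J i m) -> P (substr J m.+1 k) -> P (substr J i k).
Proof.
move=> HS HJ im mk kn H1 H2.
have Hs : size (substr J i k).2 = k - i by apply: size_substr; lia.
apply: (HS _ (m - i)); first exact: substr_string.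
- rewrite Hs; lia.
- rewrite substr_trans; [|lia|lia]. rewrite addn0.
  by have -> : i + (m - i) = m by lia.
- rewrite Hs substr_trans; [|lia|lia].
  have -> : i + (m - i).+1 = m.+1 by lia.
  by have -> : i + (k - i) = k by lia.
Qed.

Local Notation compl := (str_complement src tgt rel).

Lemma compl_inv (P : strset V A) : (forall x, P x -> P (inv x)) ->
  forall x, compl P x -> compl P (inv x).
Proof.
move=> Hi x [Hx nP]; split; first exact: inv_string.
move=> Pi; apply: nP; rewrite -(invK (x:=x)); first exact: Hi.
by case: Hx.
Qed.

Lemma us_back (P : strset V A) u t : (forall x, P x -> P (inv x)) -> is_string u ->
  usingle u t -> P t -> P u.
Proof.
move=> Hi Hu [->|->] // Pt; rewrite -(invK (x:=u)); first exact: Hi.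
by case: Hu.
Qed.

Lemma tri s J m c d : m < size J.2 -> c <= d -> d <= size J.2 -> Lc s J.2 c -> Rc (~~ s) J.2 d ->
  Sig s (substr J 0 m) (substr J c d) \/ Sig s (substr J m.+1 (size J.2)) (substr J c d) \/
  [/\ c <= m, m < d, Sig s (substr J 0 m) (substr J c m) &
      Sig s (substr J m.+1 (size J.2)) (substr J m.+1 d)].
Proof.
move=> mn cd dn Hc Hd.
have [dm|md] := leqP d m.
  left; apply: Sig_restr => //; [lia|by rewrite Hc orbT|by rewrite Hd orbT].
have [mc|cm] := ltnP m c.
  right; left; apply: Sig_restr => //; [by rewrite Hc orbT|by rewrite Hd orbT].
right; right; split => //.
  apply: Sig_restr => //; [lia|by rewrite Hc orbT|by rewrite eqxx].
apply: Sig_restr => //; [by rewrite eqxx|by rewrite Hd orbT].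
Qed.

Local Notation pd := (pi_down src tgt rel).
Local Notation pu := (pi_up src tgt rel).
Local Notation bic := (biclosed src tgt rel).

Lemma pdE (S : strset V A) x : pd S x <-> is_string x /\ (forall y, Sig true x y -> S y).
Proof.
split; move=> [Hx H]; split => // y Hy; apply: H; by apply/SbE.
Qed.
Lemma puE (S : strset V A) x : pu S x <-> is_string x /\ exists y, Sig false x y /\ S y.
Proof.
split; move=> [Hx [y [Hy Sy]]]; split => //; exists y; split => //; by apply/StE.
Qed.

Lemma sext (S T : strset V A) : ssubset S T -> ssubset T S -> S = T.
Proof.
move=> H1 H2; apply: functional_extensionality => x.
by apply: propositional_extensionality; split; [apply: H1|apply: H2].
Qed.

Lemma pd_mono (S T : strset V A) : ssubset S T -> ssubset (pd S) (pd T).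
Proof. by move=> H x [Hx Hs]; split => // y /Hs; apply: H. Qed.
Lemma pu_mono (S T : strset V A) : ssubset S T -> ssubset (pu S) (pu T).
Proof. by move=> H x [Hx [y [Hy Sy]]]; split => //; exists y; split => //; apply: H. Qed.

Section Bic.
Variable S : strset V A.
Hypothesis HS : bic S.

Let Hstr : forall x, S x -> is_string x. Proof. by case: HS. Qed.
Let Hinv : forall x, S x -> S (inv x). Proof. by case: HS => _ []. Qed.
Let SpS : SplitClosed S. Proof. by case: HS => _ [_ [H _]]; apply: split_of_closed. Qed.
Let SpC : SplitClosed (compl S). Proof. by case: HS => _ [_ [_ H]]; apply: split_of_closed. Qed.

Lemma pd_sub : ssubset (pd S) S.
Proof. move=> x /pdE [_ H]; apply: H; exact: Sig_self. Qed.

Lemma sub_pu : ssubset S (pu S).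
Proof. move=> x Sx; apply/puE; split; first exact: Hstr. by exists x; split => //; apply: Sig_self. Qed.

Lemma pd_pd : ssubset (pd S) (pd (pd S)).
Proof.
move=> x /pdE [Hx H]; apply/pdE; split => // y Hy; apply/pdE; split; first exact: Sig_string Hy.
move=> z Hz; apply: H; exact: Sig_trans Hy Hz.
Qed.

Lemma pu_pu : ssubset (pu (pu S)) (pu S).
Proof.
move=> x /puE [Hx [y [Hy /puE [_ [z [Hz Sz]]]]]]; apply/puE; split => //.
by exists z; split => //; apply: Sig_trans Hy Hz.
Qed.

Lemma pu_pd : ssubset (pu (pd S)) (pu S).
Proof.
move=> x /puE [Hx [y [Hy Py]]]; apply/puE; split => //.
by exists y; split => //; apply: pd_sub.
Qed.

Lemma pd_pu : ssubset (pd (pu S)) (pd S).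
Proof.
have step : forall y, (forall y', size y'.2 < size y.2 -> is_string y' ->
     (forall z, Sig true y' z -> pu S z) -> S y') ->
   is_string y -> (forall z, Sig true y z -> pu S z) -> S y.
  move=> y IH Hy Hsub.
  have /puE [_ [t [[a [b [/andP[ab bn] [/andP[Ha Hb] Ht]]]] St]]] := Hsub y (Sig_self _ _).
  have Sab : S (substr y a b) by apply: (us_back Hinv _ Ht St); exact: substr_string.
  have Hprop : forall c d, c <= d -> d <= size y.2 -> Lc true y.2 c -> Rc false y.2 d ->
      (0 < c) || (d < size y.2) -> S (substr y c d).
    move=> c d cd dn Hc Hd Hp; apply: IH.
    - rewrite size_substr //; lia.
    - exact: substr_string.
    - move=> z Hz; apply: Hsub; apply: Sig_trans Hy _ Hz; exact: Sig_at.
  have S0b : S (substr y 0 b).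
    have [a0|apos] := posnP a; first by rewrite -a0.
    have Hu : S (substr y 0 a.-1).
      apply: Hprop => //; [lia|exact: Lc_Rc|apply/orP; right; lia].
    apply: (split_sub SpS Hy _ _ bn Hu); [lia|lia|by rewrite prednK].
  have [bE|bl] := eqVneq b (size y.2); first by rewrite -(substr_full y) -bE.
  have bl' : b < size y.2 by lia.
  have Hw : S (substr y b.+1 (size y.2)).
    by apply: Hprop => //; [exact: Rc_Lc|exact: Rcn].
  rewrite -(substr_full y); exact: (split_sub SpS Hy _ bl' _ S0b Hw).
have claim : forall k y, size y.2 <= k -> is_string y ->
    (forall z, Sig true y z -> pu S z) -> S y.
  elim=> [|k IH] y Hk; apply: step => y' Hs; first lia.
  apply: IH; lia.
move=> x /pdE [Hx H]; apply/pdE; split => // y Hy.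
apply: (claim (size y.2)) => //; first exact: Sig_string Hy.
move=> z Hz; apply: H; exact: Sig_trans Hy Hz.
Qed.

Lemma pu_pupd : ssubset (pu S) (pu (pd S)).
Proof.
move=> x /puE [Hx [y [[a0 [b0 [/andP[ab0 bn0] [/andP[Ha0 Hb0] Hy0]]]] Sy]]].
have step : forall a b, (forall a' b', b' - a' < b - a -> a' <= b' -> b' <= size x.2 ->
     Lc false x.2 a' -> Rc true x.2 b' -> S (substr x a' b') -> pu (pd S) x) ->
   a <= b -> b <= size x.2 -> Lc false x.2 a -> Rc true x.2 b -> S (substr x a b) -> pu (pd S) x.
  move=> a b IH ab bn Ha Hb St.
  set t := substr x a b.
  have Ht : is_string t by exact: substr_string.
  have nt : size t.2 = b - a by apply: size_substr.
  case: (classic (pd S t)) => Hpd.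
    apply/puE; split => //; exists t; split => //; exact: Sig_at.
  have [y1 [Hy1 nS]] : exists y, Sig true t y /\ ~ S y.
    apply: NNPP => Hne; apply: Hpd; apply/pdE; split => // y2 Hy2.
    apply: NNPP => nS; apply: Hne; by exists y2.
  case: Hy1 => [c [d [/andP[cd dn] [/andP[Hc Hd] Hu]]]].
  have nSc : ~ S (substr t c d) by move=> Sc; apply: nS; apply: (us_P Hinv Sc Hu).
  case: (classic ((0 < c) /\ S (substr t 0 c.-1))) => [[cpos Sl]|nl].
    have Hr : Rc true t.2 c.-1 by exact: (Lc_Rc Hc cpos).
    apply: (IH a (a + c.-1)); [lia|lia|lia|exact: Ha| |].
      apply: (Rc_ext (b:=b)) => //; lia.
    move: Sl; rewrite substr_trans; [by rewrite addn0|lia|lia].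
  case: (classic ((d < size t.2) /\ S (substr t d.+1 (size t.2)))) => [[dl Sr]|nr].
    have Hl : Lc false t.2 d.+1 by exact: (Rc_Lc Hd dl).
    apply: (IH (a + d.+1) b); [lia|lia|lia| |exact: Hb|].
      apply: (Lc_ext (b:=b)) => //; lia.
    move: Sr; rewrite nt substr_trans; [|lia|lia].
    by have -> : a + (b - a) = b by lia.
  have C1 : compl S (substr t 0 d).
    have [c0|cpos] := posnP c; first by rewrite -c0; split => //; exact: substr_string.
    have C0 : compl S (substr t 0 c.-1).
      split; first exact: substr_string.
      by move=> Sl; apply: nl.
    apply: (split_sub SpC Ht _ _ dn C0); [lia|lia|].
    rewrite prednK //; split => //; exact: substr_string.
  have C2 : compl S t.
    have [dE|dl] := eqVneq d (size t.2); first by rewrite -(substr_full t) -dE.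
    have dl' : d < size t.2 by lia.
    have C3 : compl S (substr t d.+1 (size t.2)).
      split; first exact: substr_string.
      by move=> Sr; apply: nr.
    rewrite -(substr_full t); exact: (split_sub SpC Ht _ dl' _ C1 C3).
  by case: C2.
have claim : forall k a b, b - a <= k -> a <= b -> b <= size x.2 ->
    Lc false x.2 a -> Rc true x.2 b -> S (substr x a b) -> pu (pd S) x.
  elim=> [|k IH] a b Hk; apply: step => a' b' Hs; first lia.
  apply: IH; lia.
apply: (claim (b0 - a0) a0 b0) => //.
by apply: (us_back Hinv _ Hy0 Sy); exact: substr_string.
Qed.

Lemma bic_pd : bic (pd S).
Proof.
have Hi : forall x, pd S x -> pd S (inv x).
  move=> x /pdE [Hx H]; apply/pdE; split; first exact: inv_string.
  move=> y Hy; apply: H; exact: Sig_inv.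
have Sp : SplitClosed (pd S).
  move=> J m HJ mn /pdE [_ H1] /pdE [_ H2]; apply/pdE; split => // y.
  move=> [c [d [/andP[cd dn] [/andP[Hc Hd] Hy]]]].
  apply: (us_P Hinv _ Hy).
  case: (tri mn cd dn Hc Hd) => [H|[H|[cm md Hl Hr]]]; [exact: H1|exact: H2|].
  apply: (split_sub SpS HJ cm md dn); [exact: H1|exact: H2].
have SpC' : SplitClosed (compl (pd S)).
  move=> J m HJ mn [_ n1] [_ n2]; split => // /pdE [_ HJall].
  have [l E] := onth_some mn.
  case El : l.2.
    apply: n2; apply/pdE; split; first exact: substr_string.
    move=> y Hy; apply: HJall; apply: Sig_trans HJ _ Hy; apply: Sig_at => //.
    + by rewrite /Lc /= E El.
    + exact: Rcn.
  apply: n1; apply/pdE; split; first exact: substr_string.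
  move=> y Hy; apply: HJall; apply: Sig_trans HJ _ Hy; apply: Sig_at => //.
  + exact: ltnW.
  + by rewrite /Rc E El orbT.
split; first by move=> x [].
split; first exact: Hi.
split; first exact: closed_of_split.
apply: closed_of_split => //; exact: compl_inv.
Qed.

Lemma bic_pu : bic (pu S).
Proof.
have Hi : forall x, pu S x -> pu S (inv x).
  move=> x /puE [Hx [y [Hy Sy]]]; apply/puE; split; first exact: inv_string.
  exists y; split => //; apply: Sig_inv; first exact: inv_string.
  rewrite invK //; by case: Hx.
have Sp : SplitClosed (pu S).
  move=> J m HJ mn /puE [_ [y1 [Hy1 S1]]] /puE [_ [y2 [Hy2 S2]]]; apply/puE; split => //.
  have [l E] := onth_some mn.
  case El : l.2.
    exists y1; split => //; apply: Sig_trans HJ _ Hy1; apply: Sig_at => //.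
    + exact: ltnW.
    + by rewrite /Rc E El orbT.
  exists y2; split => //; apply: Sig_trans HJ _ Hy2; apply: Sig_at => //.
  + by rewrite /Lc /= E El.
  + exact: Rcn.
have SpC' : SplitClosed (compl (pu S)).
  move=> J m HJ mn [_ n1] [_ n2]; split => // /puE [_ [y [Hy Sy]]].
  case: Hy => [c [d [/andP[cd dn] [/andP[Hc Hd] Hy]]]].
  have Scd : S (substr J c d) by apply: (us_back Hinv _ Hy Sy); exact: substr_string.
  case: (tri mn cd dn Hc Hd) => [H|[H|[cm md Hl Hr]]].
  - apply: n1; apply/puE; split; first exact: substr_string. by exists (substr J c d).
  - apply: n2; apply/puE; split; first exact: substr_string. by exists (substr J c d).
  have C1 : compl S (substr J c m).
    split; first exact: substr_string.
    move=> Sl; apply: n1; apply/puE; split; first exact: substr_string. by exists (substr J c m).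
  have C2 : compl S (substr J m.+1 d).
    split; first exact: substr_string.
    move=> Sr; apply: n2; apply/puE; split; first exact: substr_string. by exists (substr J m.+1 d).
  by case: (split_sub SpC HJ cm md dn C1 C2).
split; first by move=> x [].
split; first exact: Hi.
split; first exact: closed_of_split.
apply: closed_of_split => //; exact: compl_inv.
Qed.

End Bic.

End W.

Theorem proposition8p5 (V A : finType) (src tgt : A -> V) (rel : A -> A -> bool)
  (Hgentle : gentle src tgt rel)
  (Hfin : finitely_many_strings src tgt rel) :
  let Bicl := biclosed src tgt rel in
  let pd := pi_down src tgt rel in
  let pu := pi_up src tgt rel in
  (* (i) *)
  (forall S, Bicl S -> ssubset (pd S) S /\ ssubset S (pu S)) /\
  (* (ii) *)
  (forall S, Bicl S ->
     pd (pd S) = pd S /\ pd (pu S) = pd S /\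
     pu (pu S) = pu S /\ pu (pd S) = pu S) /\
  (* (iii) *)
  (forall S T, Bicl S -> Bicl T -> ssubset S T ->
     ssubset (pd S) (pd T) /\ ssubset (pu S) (pu T)) /\
  (* fibers coincide *)
  (forall S T, Bicl S -> Bicl T -> (pd S = pd T <-> pu S = pu T)) /\
  (* order congruence *)
  order_congruence Bicl (@ssubset V A) (fun S T => pd S = pd T).
Proof.
move=> Bicl pd pu; subst Bicl pd pu.
have pdm := @pd_mono V A src tgt rel.
have pum := @pu_mono V A src tgt rel.
have Eqs : forall S, biclosed src tgt rel S ->
     (pi_down src tgt rel) ((pi_down src tgt rel) S) = (pi_down src tgt rel) S /\ (pi_down src tgt rel) ((pi_up src tgt rel) S) = (pi_down src tgt rel) S /\ (pi_up src tgt rel) ((pi_up src tgt rel) S) = (pi_up src tgt rel) S /\ (pi_up src tgt rel) ((pi_down src tgt rel) S) = (pi_up src tgt rel) S.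
  move=> S HS; split; last split; last split.
  - apply: sext; [exact: pdm ((@pd_sub _ _ src tgt rel S))|exact: (@pd_pd _ _ src tgt rel S)].
  - apply: sext; [exact: pd_pu HS|exact: pdm (sub_pu HS)].
  - apply: sext; [exact: (@pu_pu _ _ src tgt rel S)|exact: pum (sub_pu HS)].
  - apply: sext; [exact: (@pu_pd _ _ src tgt rel S)|exact: pu_pupd HS].
have Fib : forall S T, biclosed src tgt rel S -> biclosed src tgt rel T -> ((pi_down src tgt rel) S = (pi_down src tgt rel) T <-> (pi_up src tgt rel) S = (pi_up src tgt rel) T).
  move=> S T HS HT; have [E1 [E2 [E3 E4]]] := Eqs S HS; have [F1 [F2 [F3 F4]]] := Eqs T HT.
  split => E.
  - by rewrite -E4 -F4 E.
  - by rewrite -E2 -F2 E.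
split; first by move=> S HS; split; [exact: (@pd_sub _ _ src tgt rel S)|exact: sub_pu HS].
split; first exact: Eqs.
split; first by move=> S T _ _ H; split; [exact: pdm H|exact: pum H].
split; first exact: Fib.
split; first by [].
split; first by move=> ? ? _ _ ->.
split; first by move=> ? ? ? _ _ _ -> ->.
split.
  move=> S HS; exists ((pi_down src tgt rel) S), ((pi_up src tgt rel) S); split; first exact: bic_pd.
  split; first exact: bic_pu.
  move=> T HT; split.
  - move=> E; split; first by rewrite E; exact: (@pd_sub _ _ src tgt rel T).
    by rewrite ((Fib _ _ HS HT).1 E); exact: sub_pu HT.
  - move=> [h1 h2]; apply: sext.
    + move=> x Hx; exact: (pdm _ _ h1 x (@pd_pd _ _ src tgt rel S x Hx)).
    + move=> x Hx; exact: (@pd_pu _ _ src tgt rel S HS x (pdm _ _ h2 x Hx)).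
split.
  move=> S T mx my HS HT ST [Bx [Ex Hx]] [By [Ey Hy]].
  have h1 : ssubset mx ((pi_down src tgt rel) S) by apply: Hx; [exact: bic_pd|rewrite (Eqs S HS).1].
  have h2 : ssubset ((pi_down src tgt rel) T) my by rewrite Ey; exact: pd_sub.
  move=> z Hz; exact: (h2 z (pdm _ _ ST z (h1 z Hz))).
move=> S T mx my HS HT ST [Bx [Ex Hx]] [By [Ey Hy]].
have h1 : ssubset ((pi_up src tgt rel) T) my by apply: Hy; [exact: bic_pu|rewrite (Eqs T HT).2.1].
have h2 : ssubset mx ((pi_up src tgt rel) S) by rewrite ((Fib _ _ HS Bx).1 Ex); exact: sub_pu.
move=> z Hz; exact: (h1 z (pum _ _ ST z (h2 z Hz))).
Qed.
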